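(* Let $m\ge 2$ and $N\ge 1$ be integers, let $J_1,\dots,J_{m-1}\in\{1,-1\}$, and let $\zeta^-_1,\dots,\zeta^-_{m-1}\in\mathcal{P}_N^-$ and $f^+\in\mathcal{P}_N^+$ with $f^+(0)\neq 0$. Consider the system of conditions, for an unknown vector $(x_1,\dots,x_m)^T$ of functions on $\mathbb{T}$, \[ \begin{cases} \zeta^-_k\,x_m - J_k\, f^+\,\widetilde{x_k}\in\mathcal{P}^+, & k=1,\dots,m-1,\\ \zeta^-_1x_1+\zeta^-_2x_2+\dots+\zeta^-_{m-1}x_{m-1}+f^+\,\widetilde{x_m}\in\mathcal{P}^+. \end{cases} \] Let $\mathbf{u}=(u_1,\dots,u_m)^T\in(\mathcal{P}_N^+)^{m\times 1}$ and $\mathbf{v}=(v_1,\dots,v_m)^T\in(\mathcal{P}_N^+)^{m\times 1}$ be two (possibly identical) solutions of this system, i.e. all conditions hold when $x_i=u_i$ for all $i$, and also when $x_i=v_i$ for all $i$. Then \[ \sum_{k=1}^{m-1}J_k\,u_k\,\widetilde{v_k}+\widetilde{u_m}\,v_m \] is a constant function on $\mathbb{T}$.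
   Context: $\mathbb{T}=\{z\in\mathbb{C}:|z|=1\}$. $\mathcal{P}$ denotes the set of Laurent polynomials $P(z)=\sum_{k=-n}^{m}p_kz^k$ (with complex coefficients, viewed as functions on $\mathbb{T}$), and $\mathcal{P}^+$ the set of (ordinary) polynomials $\sum_{k\ge 0}p_kz^k$. $\mathcal{P}_N$ is the set of Laurent polynomials $\sum_{k=-n}^{m}p_kz^k$ with $0\le n,m\le N$, and $\mathcal{P}_N^+=\mathcal{P}_N\cap\mathcal{P}^+$. For $P(z)=\sum_{k=-n}^m p_kz^k$, $\widetilde{P}(z)=\sum_{k=-n}^m\overline{p_k}z^{-k}$ (so $\widetilde{P}(z)=\overline{P(z)}$ for $z\in\mathbb{T}$). $\mathcal{P}_N^-=\{P:\widetilde{P}\in\mathcal{P}_N^+\}$. *)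

(* Defs.v *)
From HB Require Import structures.
From mathcomp Require Import all_boot all_order all_algebra.
From mathcomp Require Import complex.
From mathcomp Require Import reals.
Set Implicit Arguments. Unset Strict Implicit. Unset Printing Implicit Defensive.
Import Order.TTheory GRing.Theory Num.Theory.
Local Open Scope ring_scope.

(* Laurent polynomials are viewed as functions on the unit circle T.
   Since a Laurent polynomial is determined by its restriction to T,
   a function f : C -> C "is" a Laurent polynomial when it agrees on T
   with one. For P in the Laurent ring, tilde P (z) = conj (P z) on T. *)

Definition onT (R : realType) (z : R[i]) : Prop := `|z| = 1.

Definition inPplus (R : realType) (f : R[i] -> R[i]) : Prop :=
  exists q : {poly R[i]}, forall z, onT z -> f z = q.[z].

Definition inPNplus (R : realType) (N : nat) (f : R[i] -> R[i]) : Prop :=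
  exists q : {poly R[i]}, (size q <= N.+1)%N /\ forall z, onT z -> f z = q.[z].

Definition inPNminus (R : realType) (N : nat) (f : R[i] -> R[i]) : Prop :=
  inPNplus N (fun z => (f z)^*).

(* x = (x_1,...,x_m) (indices 1..m of a nat-indexed family) solves the system *)
Definition solves (R : realType) (m : nat) (J : nat -> R[i])
  (zeta : nat -> R[i] -> R[i]) (fp : R[i] -> R[i]) (x : nat -> R[i] -> R[i]) : Prop :=
  (forall k, (1 <= k <= m.-1)%N ->
     inPplus (fun z => zeta k z * x m z - J k * fp z * (x k z)^*)) /\
  inPplus (fun z => \sum_(1 <= k < m) zeta k z * x k z + fp z * (x m z)^*).

(* Main.v *)
Require Import Defs.
From HB Require Import structures.
From mathcomp Require Import all_boot all_order all_algebra.
From mathcomp Require Import complex reals ring.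
Import Order.TTheory GRing.Theory Num.Theory.
Set Implicit Arguments. Unset Strict Implicit. Unset Printing Implicit Defensive.
Local Open Scope ring_scope.

Section Gen.
Variable C : numClosedFieldType.

Lemma T_conj (z : C) : `|z| = 1 -> z^* * z = 1.
Proof. by move=> h; rewrite -normCKC h expr1n. Qed.

Lemma T_neq0 (z : C) : `|z| = 1 -> z != 0.
Proof. by move=> h; apply/negP => /eqP z0; move: h; rewrite z0 normr0 => /eqP; rewrite eq_sym oner_eq0. Qed.

Lemma T_conjV (z : C) : `|z| = 1 -> z^* = z^-1.
Proof. by move=> h; rewrite -[z^*]mulr1 -(mulfV (T_neq0 h)) mulrA T_conj // mul1r. Qed.

Definition zt (n : nat) : C := (n%:R + 'i) / (n%:R - 'i).

Lemma zt_den (n : nat) : (n%:R - 'i : C) = (n%:R + 'i)^*.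
Proof. by rewrite rmorphD /= conjC_nat conjCi. Qed.

Lemma zt_num_neq0 (n : nat) : (n%:R + 'i : C) != 0.
Proof.
apply/negP => /eqP h.
have h2 : ('i : C) = - n%:R by apply/eqP; rewrite -subr_eq0 opprK addrC h.
have : ('i : C)^* = 'i by rewrite h2 rmorphN /= conjC_nat.
rewrite conjCi => /eqP; rewrite eq_sym -addr_eq0 -mulr2n mulrn_eq0 /=.
by rewrite (negbTE (neq0Ci C)).
Qed.

Lemma zt_den_neq0 (n : nat) : (n%:R - 'i : C) != 0.
Proof. by rewrite zt_den conjC_eq0 zt_num_neq0. Qed.

Lemma zt_T (n : nat) : `|zt n| = 1.
Proof.
rewrite /zt normrM normfV zt_den norm_conjC divff //.
by rewrite normr_eq0 zt_num_neq0.
Qed.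

Lemma zt_inj : injective zt.
Proof.
move=> a b /eqP; rewrite /zt eqr_div ?zt_den_neq0 // => /eqP h.
have : ('i *+ 2 : C) * (b%:R - a%:R) = 0.
  have -> : ('i *+ 2 : C) * (b%:R - a%:R) = (a%:R + 'i) * (b%:R - 'i) - (b%:R + 'i) * (a%:R - 'i) by ring.
  by rewrite h subrr.
move/eqP; rewrite mulf_eq0 mulrn_eq0 /= (negbTE (neq0Ci C)) /= subr_eq0 eqr_nat.
by move/eqP.
Qed.

Lemma polyT (p q : {poly C}) : (forall z : C, `|z| = 1 -> p.[z] = q.[z]) -> p = q.
Proof.
move=> h; apply/eqP; rewrite -subr_eq0; apply/negPn/negP => H.
set rs := map zt (iota 0 (size (p - q))).
have hr : all (root (p - q)) rs.
  apply/allP => x /mapP [n _ ->]; rewrite /root hornerD hornerN h ?zt_T // subrr //.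
have hu : uniq rs by rewrite map_inj_uniq ?iota_uniq //; exact: zt_inj.
by have := max_poly_roots H hr hu; rewrite size_map size_iota ltnn.
Qed.

Definition rv (n : nat) (p : {poly C}) := \poly_(i < n.+1) (p`_(n - i))^*.

Lemma size_rv n p : (size (rv n p) <= n.+1)%N.
Proof. exact: size_poly. Qed.

Lemma aux2 (a w : C) (i n : nat) : `|w| = 1 -> (i <= n)%N ->
  a * w^* ^+ i * w ^+ n = a * w ^+ (n - i).
Proof.
move=> hw hi; rewrite T_conjV // exprB ?unitfE ?T_neq0 // exprVn.
by rewrite -mulrA [X in a * X]mulrC.
Qed.

Lemma rvP (n : nat) (p : {poly C}) (z : C) : (size p <= n.+1)%N -> `|z| = 1 ->
  (p.[z])^* * z ^+ n = (rv n p).[z].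
Proof.
move=> hs hz; rewrite (horner_coef_wide z hs) horner_poly rmorph_sum mulr_suml.
rewrite [RHS](reindex_inj rev_ord_inj) /=.
apply: eq_bigr => i _; have hi : (i <= n)%N by rewrite -ltnS.
rewrite subSS subKn // rmorphM rmorphXn /=; exact: aux2.
Qed.

Lemma stepC (F : C -> C) n (fp P : {poly C}) : fp.[0] != 0 ->
  (exists G : {poly C}, forall z, `|z| = 1 -> F z * z ^+ n = G.[z]) ->
  (forall z, `|z| = 1 -> fp.[z] * F z = P.[z]) ->
  exists G1 : {poly C}, forall z, `|z| = 1 -> F z = G1.[z].
Proof.
move=> h0 [G hG] hP.
have e : fp * G = P * 'X^n.
  apply: polyT => z hz; rewrite !hornerM hornerXn -hG // -hP //; ring.
have hd : 'X^n %| G.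
  have cop : coprimep ('X^n) fp.
    by apply: coprimep_expl; rewrite coprimep_sym coprimepX /root h0.
  by rewrite -(Gauss_dvdpr _ cop) e dvdp_mull.
exists (G %/ 'X^n) => z hz.
apply: (mulIf (expf_neq0 n (T_neq0 hz))).
by rewrite hG // -{1}(divpK hd) hornerM hornerXn.
Qed.

Lemma stepD (G1 H1 : {poly C}) :
  (forall z, `|z| = 1 -> G1.[z] = (H1.[z])^*) ->
  forall z, `|z| = 1 -> G1.[z] = G1`_0.
Proof.
move=> h.
have e : G1 * 'X^(size H1) = rv (size H1) H1.
  apply: polyT => z hz; rewrite hornerM hornerXn -rvP // h //.
have hs : (size G1 <= 1)%N.
  have [->|nz] := eqVneq G1 0; first by rewrite size_poly0.
  have := size_rv (size H1) H1; rewrite -e size_mulXn //.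
  by rewrite -addn1 leq_add2l.
by move=> z _; rewrite {1}(size1_polyC hs) hornerC.
Qed.

End Gen.

Section Main.
Variables (R : realType) (m N : nat) (J : nat -> R[i]) (zeta : nat -> R[i] -> R[i])
  (fp : {poly R[i]}).

Definition S (a b : nat -> {poly R[i]}) (z : R[i]) :=
  \sum_(1 <= k < m) J k * (a k).[z] * ((b k).[z])^* + ((a m).[z])^* * (b m).[z].

Lemma formG (a b : nat -> {poly R[i]}) :
  (forall k, (1 <= k <= m)%N -> (size (a k) <= N.+1)%N) ->
  (forall k, (1 <= k <= m)%N -> (size (b k) <= N.+1)%N) -> (2 <= m)%N ->
  exists G : {poly R[i]}, forall z, onT z -> S a b z * z ^+ N = G.[z].
Proof.
move=> ha hb hm.
exists (\sum_(1 <= k < m) J k *: (a k * rv N (b k)) + rv N (a m) * b m).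
move=> z hz; rewrite /S mulrDl mulr_suml hornerD horner_sum; congr (_ + _).
  apply: eq_big_nat => k /andP [k1 km].
  rewrite hornerZ hornerM -rvP ?hb ?k1 ?(ltnW km) //; ring.
rewrite hornerM -rvP ?ha ?leqnn ?(leq_trans _ hm) //; ring.
Qed.

Lemma formP (a b : nat -> {poly R[i]}) :
  solves m J zeta (fun z => fp.[z]) (fun k z => (a k).[z]) ->
  solves m J zeta (fun z => fp.[z]) (fun k z => (b k).[z]) ->
  exists P : {poly R[i]}, forall z, onT z -> fp.[z] * S a b z = P.[z].
Proof.
move=> [_ [q hq]] [hb _].
have key : forall n, (n <= m)%N -> exists P : {poly R[i]}, forall z, onT z ->
  fp.[z] * \sum_(1 <= k < n) J k * (a k).[z] * ((b k).[z])^* =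
  (b m).[z] * \sum_(1 <= k < n) zeta k z * (a k).[z] - P.[z].
  elim=> [|n IH] hn.
    by exists 0 => z _; rewrite !big_geq // horner0 !mulr0 subr0.
  case: n IH hn => [|n] IH hn.
    by exists 0 => z _; rewrite !big_geq // horner0 !mulr0 subr0.
  have [P hP] := IH (ltnW hn).
  have [p hp] := hb n.+1 (ltac:(apply/andP; split => //; rewrite -ltnS (ltn_predK hn) //)).
  exists (P + a n.+1 * p) => z hz.
  rewrite big_nat_recr //= [X in _ = _ * X - _]big_nat_recr //= mulrDr hP // hornerD hornerM -hp //; ring.
have [P hP] := key m (leqnn m).
exists (b m * q - P) => z hz.
rewrite /S mulrDr hP // hornerD hornerN hornerM -hq //; ring.
Qed.

Lemma conjS (a b : nat -> {poly R[i]}) :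
  (forall k, (1 <= k <= m.-1)%N -> J k = 1 \/ J k = -1) -> (2 <= m)%N ->
  forall z, (S a b z)^* = S b a z.
Proof.
move=> hJ hm z; rewrite /S rmorphD rmorph_sum /= rmorphM /= conjCK mulrC.
congr (_ + _); apply: eq_big_nat => k /andP [k1 km].
have hk : (1 <= k <= m.-1)%N by rewrite k1 -ltnS (ltn_predK hm).
rewrite !rmorphM /= conjCK.
have -> : (J k)^* = J k by case: (hJ k hk) => ->; rewrite ?rmorphN /= rmorph1.
ring.
Qed.

End Main.

Theorem lemma1 (R : realType) (m N : nat) (hm : (2 <= m)%N) (hN : (1 <= N)%N)
  (J : nat -> R[i]) (hJ : forall k, (1 <= k <= m.-1)%N -> J k = 1 \/ J k = -1)
  (zeta : nat -> R[i] -> R[i])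
  (hzeta : forall k, (1 <= k <= m.-1)%N -> inPNminus N (zeta k))
  (fp : {poly R[i]}) (hfp : (size fp <= N.+1)%N) (hfp0 : fp.[0] != 0)
  (u v : nat -> {poly R[i]})
  (hu : forall k, (1 <= k <= m)%N -> (size (u k) <= N.+1)%N)
  (hv : forall k, (1 <= k <= m)%N -> (size (v k) <= N.+1)%N)
  (hsu : solves m J zeta (fun z => fp.[z]) (fun k z => (u k).[z]))
  (hsv : solves m J zeta (fun z => fp.[z]) (fun k z => (v k).[z])) :
  exists c : R[i], forall z : R[i], onT z ->
    \sum_(1 <= k < m) J k * (u k).[z] * ((v k).[z])^* + ((u m).[z])^* * (v m).[z] = c.
Proof.
have [P1 hP1] := formP hsu hsv.
have [P2 hP2] := formP hsv hsu.
have [G1 hG1] := stepC hfp0 (formG J hu hv hm) hP1.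
have [H1 hH1] := stepC hfp0 (formG J hv hu hm) hP2.
have e : forall z : R[i], `|z| = 1 -> G1.[z] = (H1.[z])^*.
  by move=> z hz; rewrite -hG1 // -hH1 // conjS.
exists G1`_0 => z hz.
by rewrite -(stepD e hz) -hG1.
Qed.
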